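(* Let $K$ be a CMI in pure form. Then $K=(\cdot,\langle\ \rangle)$ (i.e., $K$ is degenerate) if and only if $\mathrm{can}(K)=(\cdot,\langle\ \rangle)$.
   Context: Setting: $X_1,\dots,X_n$ jointly distributed discrete random variables with $H(X_i)<\infty$; distribution unspecified. $X_\alpha=(X_i,i\in\alpha)$, $X_\emptyset$ constant. A CMI is $K=(C,\langle Q_1,\dots,Q_k\rangle)$, $k\ge0$, $C\subseteq\{1,\dots,n\}$, $\langle\cdot\rangle$ an unordered multiset of subsets; valid (for a given distribution) if $\sum_iH(X_{Q_i}|X_C)-H(X_{Q_1},\dots,X_{Q_k}|X_C)=0$. Empty members may be deleted. $K$ is degenerate if it is valid for every joint distribution; all degenerate CMIs are identified and written $(\cdot,\langle\ \rangle)$. Pure form: all $Q_i\ne\emptyset$ and $Q_i\cap C=\emptyset$. Canonical form of pure $K$: $\mathbb I_K$ = indices lying in at least two members (distinct positions) of the collection if $k\ge2$, else $\emptyset$; $P_1,\dots,P_t$ the nonempty sets among $Q_i\setminus\mathbb I_K$; $\mathrm{can}(K)=(\cdot,\langle\ \rangle)$ if $k\le1$; $(C,\langle\mathbb I_K,\mathbb I_K\rangle)$ if $k\ge2,\mathbb I_K\ne\emptyset,t\le1$; $(C,\langle P_1,\dots,P_t\rangle)$ if $k\ge2,\mathbb I_K=\emptyset$; $(C,\langle\mathbb I_K,\mathbb I_K,P_1,\dots,P_t\rangle)$ if $k\ge2,\mathbb I_K\ne\emptyset,t\ge2$. *)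

(* Defs.v *)
From HB Require Import structures.
From mathcomp Require Import all_boot all_order all_algebra.
From mathcomp Require Import all_classical all_reals.
From mathcomp Require Import ereal esum exp.
Set Implicit Arguments. Unset Strict Implicit. Unset Printing Implicit Defensive.
Import Order.TTheory GRing.Theory Num.Theory.
Local Open Scope classical_set_scope.
Local Open Scope ring_scope.

Section CMI.
Variables (R : realType) (n : nat).

(* A joint outcome of X_1,...,X_n.  Every discrete random variable takes
   countably many values, which we encode (injectively) as naturals;
   entropies are invariant under such relabelling. *)
Definition outcome := {ffun 'I_n -> nat}.

Definition is_dist (p : outcome -> R) : Prop :=
  (forall x, 0 <= p x) /\ (\esum_(x in [set: outcome]) (p x)%:E = 1%E).

(* projection onto the coordinates in A (other coordinates set to 0):
   the value of X_A *)
Definition proj (A : {set 'I_n}) (x : outcome) : outcome :=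
  [ffun i => if i \in A then x i else 0%N].

Definition marg (p : outcome -> R) (A : {set 'I_n}) (y : outcome) : R :=
  fine (\esum_(x in [set x | proj A x = y]) (p x)%:E).

Definition ent (p : outcome -> R) (A : {set 'I_n}) : \bar R :=
  \esum_(y in [set: outcome]) (- marg p A y * ln (marg p A y))%:E.

Definition fin_ent (p : outcome -> R) : Prop :=
  forall i : 'I_n, (ent p [set i] < +oo)%E.

(* real-valued entropy (all entropies used are finite under fin_ent) *)
Definition H (p : outcome -> R) (A : {set 'I_n}) : R := fine (ent p A).

Definition condH (p : outcome -> R) (A C : {set 'I_n}) : R :=
  H p (A :|: C) - H p C.

(* A CMI K = (C, <Q_1,...,Q_k>); the multiset is represented by a list,
   all notions below are invariant under permutation of the list. *)
Record cmi := CMI { cmiC : {set 'I_n}; cmiQ : seq {set 'I_n} }.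

Definition valid (p : outcome -> R) (K : cmi) : Prop :=
  \sum_(Q <- cmiQ K) condH p Q (cmiC K)
  - condH p (\big[@finset.setU _/finset.set0]_(Q <- cmiQ K) Q) (cmiC K) = 0.

Definition degenerate (K : cmi) : Prop :=
  forall p : outcome -> R, is_dist p -> fin_ent p -> valid p K.

Definition pure (K : cmi) : Prop :=
  forall Q, Q \in cmiQ K -> Q != finset.set0 /\ (Q :&: cmiC K == finset.set0).

(* Values of can(K): either the symbol (.,< >) (None) or a CMI (Some _).
   Under the paper's identification, "X = (.,< >)" means X is degenerate;
   the symbol itself is degenerate by definition. *)
Definition odegenerate (X : option cmi) : Prop :=
  match X with None => True | Some K => degenerate K end.

Definition IK (K : cmi) : {set 'I_n} :=
  if (2 <= size (cmiQ K))%N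
  then finset.finset (fun j : 'I_n => (2 <= count (fun Q : {set 'I_n} => j \in Q) (cmiQ K))%N)
  else finset.set0.

Definition Ps (K : cmi) : seq {set 'I_n} :=
  [seq P <- [seq Q :\: IK K | Q <- cmiQ K] | P != finset.set0].

Definition can (K : cmi) : option cmi :=
  if (size (cmiQ K) <= 1)%N then None
  else if IK K != finset.set0 then
         (if (size (Ps K) <= 1)%N then Some (CMI (cmiC K) [:: IK K; IK K])
          else Some (CMI (cmiC K) [:: IK K, IK K & Ps K]))
       else Some (CMI (cmiC K) (Ps K)).

End CMI.

(* Main.v *)
Require Import Defs.
From HB Require Import structures.
From mathcomp Require Import all_boot all_order all_algebra.
From mathcomp Require Import all_classical all_reals.
From mathcomp Require Import ereal esum exp.
Set Implicit Arguments. Unset Strict Implicit. Unset Printing Implicit Defensive.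
Import Order.TTheory GRing.Theory Num.Theory.
Local Open Scope classical_set_scope.
Local Open Scope ring_scope.

Section Aux.
Variable R : realType.

Lemma esum_pt (T : choiceType) (u : T) (c : \bar R) : (0 <= c)%E ->
  \esum_(i in [set: T]) (if i == u then c else 0%E) = c.
Proof.
move=> c0; transitivity (\esum_(i in [set u]) c); last by rewrite esum_set1.
rewrite [RHS]esum_mkcond; apply: eq_esum => i _.
case: (eqVneq i u) => [->|iu]; first by rewrite mem_set. by rewrite memNset // => /= iu0; rewrite iu0 eqxx in iu.
Qed.

Lemma esum2 (T : choiceType) (S : set T) (a : T -> \bar R) u v : u != v ->
  (forall x, x != u -> x != v -> a x = 0%E) -> (0 <= a u)%E -> (0 <= a v)%E ->
  \esum_(i in S) a i = ((if u \in S then a u else 0) + (if v \in S then a v else 0))%E.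
Proof.
move=> uv ha au av; rewrite esum_mkcond.
transitivity (\esum_(i in [set: T]) ((if i == u then (if u \in S then a u else 0) else 0)
   + (if i == v then (if v \in S then a v else 0) else 0)))%E.
  apply: eq_esum => i _.
  case: (eqVneq i u) => [->|iu]; first by rewrite (negbTE uv) adde0.
  case: (eqVneq i v) => [->|iv]; first by rewrite add0e.
  by rewrite ha // adde0; case: ifP.
rewrite esumD ?esum_pt //; try by case: ifP.
- by move=> i _; case: ifP => //; case: ifP.
- by move=> i _; case: ifP => //; case: ifP.
Qed.

Lemma sum_const_seq (T : eqType) (L : seq T) (f : T -> R) c :
  (forall x, x \in L -> f x = c) -> \sum_(x <- L) f x = c *+ size L.
Proof.
elim: L => [|x L IH] h; first by rewrite big_nil.
rewrite big_cons h ?mem_head // IH ?mulrS // => y yL; apply: h.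
by rewrite in_cons yL orbT.
Qed.

Lemma hhalf : - (1/2) * ln (1/2) = ln 2 / 2 :> R.
Proof. by rewrite div1r lnV ?posrE // mulrNN mulrC. Qed.

Lemma ln2_gt0 : 0 < ln 2 :> R.
Proof. by apply: ln_gt0; rewrite ltr1n. Qed.

End Aux.

Section Dist.
Variables (R : realType) (n : nat) (C : {set 'I_n}) (i0 : 'I_n).
Hypothesis Hi0 : i0 \notin C.

Definition ab (b : nat) : outcome n := [ffun i => if i \in C then 0%N else b].
Definition pd (x : outcome n) : R :=
  if x == ab 0 then 1/2 else if x == ab 1 then 1/2 else 0.

Lemma ab01 : ab 0 != ab 1.
Proof. by apply/eqP => /(congr1 (fun f : outcome n => f i0)); rewrite !ffunE (negbTE Hi0). Qed.

Lemma esum_pd S : \esum_(x in S) (pd x)%:E =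
  ((if ab 0 \in S then 1/2 else 0) + (if ab 1 \in S then 1/2 else 0))%:E.
Proof.
rewrite (@esum2 R _ S _ _ _ ab01).
- rewrite /pd eqxx eq_sym (negbTE ab01) eqxx.
  by case: (ab 0 \in S); case: (ab 1 \in S); rewrite /= ?adde0 ?add0e ?addr0 ?add0r ?EFinD.
- by move=> x h1 h2; rewrite /pd (negbTE h1) (negbTE h2).
- by rewrite /pd eqxx lee_fin.
- by rewrite /pd eq_sym (negbTE ab01) eqxx lee_fin.
Qed.

Lemma is_dist_pd : is_dist pd.
Proof.
split; first by move=> x; rewrite /pd; case: ifP => _ //; case: ifP.
by rewrite esum_pd !mem_setT -splitr.
Qed.

Lemma marg_pd A y : marg pd A y =
  (if Defs.proj A (ab 0) == y then 1/2 else 0) + (if Defs.proj A (ab 1) == y then 1/2 else 0).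
Proof.
have mE x : (x \in [set x | Defs.proj A x = y]) = (Defs.proj A x == y).
  by apply/idP/eqP => [/set_mem|h]; [|exact: mem_set].
by rewrite /marg esum_pd /= !mE.
Qed.

Lemma ent_sub (A : {set 'I_n}) : A \subset C -> ent pd A = 0%E.
Proof.
move=> sAC.
have e : Defs.proj A (ab 0) = Defs.proj A (ab 1).
  apply/ffunP => i; rewrite !ffunE; case: ifP => // iA.
  by rewrite (fintype.subsetP sAC i iA).
rewrite /ent; apply: esum1 => y _; rewrite marg_pd e; case: ifP => _.
  by rewrite -splitr ln1 mulr0.
by rewrite addr0 oppr0 mul0r.
Qed.

Lemma ent_nsub (A : {set 'I_n}) i : i \in A -> i \notin C -> ent pd A = (ln 2)%:E.
Proof.
move=> iA iC.
have ne : Defs.proj A (ab 0) != Defs.proj A (ab 1).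
  by apply/eqP => /(congr1 (fun f : outcome n => f i)); rewrite !ffunE iA (negbTE iC).
rewrite /ent (@esum2 R _ setT _ _ _ ne).
- rewrite !marg_pd eqxx (negbTE ne) eq_sym (negbTE ne) eqxx !mem_setT addr0 add0r.
  by rewrite hhalf -EFinD -splitr.
- move=> y h1 h2; rewrite marg_pd eq_sym (negbTE h1) eq_sym (negbTE h2).
  by rewrite addr0 oppr0 mul0r.
- rewrite marg_pd eqxx eq_sym (negbTE ne) addr0 hhalf lee_fin.
  by rewrite divr_ge0 // ltW // ln2_gt0.
- rewrite marg_pd (negbTE ne) eqxx add0r hhalf lee_fin.
  by rewrite divr_ge0 // ltW // ln2_gt0.
Qed.

Lemma fin_ent_pd : fin_ent pd.
Proof.
move=> i; case: (boolP (i \in C)) => iC.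
  by rewrite ent_sub ?ltry // finset.sub1set.
by rewrite (ent_nsub (set11 i)) // ltry.
Qed.

Lemma H_sub (A : {set 'I_n}) : A \subset C -> H pd A = 0.
Proof. by move=> h; rewrite /H ent_sub. Qed.

Lemma H_nsub (A : {set 'I_n}) i : i \in A -> i \notin C -> H pd A = ln 2.
Proof. by move=> h1 h2; rewrite /H (ent_nsub h1 h2). Qed.

End Dist.

Lemma nondeg (R : realType) (n : nat) (C : {set 'I_n}) (L : seq {set 'I_n}) :
  (1 < size L)%N -> (forall Q, Q \in L -> exists i, i \in Q /\ i \notin C) ->
  ~ degenerate R (CMI C L).
Proof.
case: L => [|Q0 L] // sL hL deg.
have [i0 [i0Q i0C]] := hL Q0 (mem_head _ _).
have := deg (@pd R n C) (is_dist_pd R i0C) (fin_ent_pd R i0C).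
rewrite /valid /=.
have HC : H (@pd R n C) C = 0 by rewrite (H_sub _ i0C).
have cQ : forall Q, Q \in Q0 :: L -> condH (@pd R n C) Q C = ln 2.
  move=> Q /hL [i [iQ iC]]; rewrite /condH HC subr0.
  by apply: (@H_nsub R n C i iC _ i) => //; rewrite inE iQ.
rewrite (sum_const_seq cQ) big_cons.
rewrite /condH HC subr0 (@H_nsub R n C i0 i0C _ i0) //; last by rewrite !inE i0Q.
rewrite (_ : size (Q0 :: L) = (size L).+1) // mulrS addrAC subrr add0r => /eqP.
rewrite mulrn_eq0.
have sL0 : (size L != 0)%N by rewrite -lt0n; exact: sL.
rewrite (negbTE sL0) /= => /eqP h.
by have := ln2_gt0 R; rewrite h ltxx.
Qed.

Theorem mainTheorem20 (R : realType) (n : nat) (K : cmi n) :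
  pure K -> (degenerate R K <-> odegenerate R (can K)).
Proof.
case: K => C L hp.
have hw : forall Q, Q \in L -> forall i, i \in Q -> i \notin C.
  move=> Q QL i iQ; have [_ /eqP h] := hp Q QL.
  apply/negP => iC; have : i \in Q :&: C by rewrite inE iQ iC.
  by rewrite /= h inE.
case: (leqP (size L) 1) => sL.
  rewrite /can /= sL; split => // _ p _ _; rewrite /valid /=.
  case: L sL {hp hw} => [|Q [|]] //= _; rewrite ?big_nil ?big_cons ?big_nil /condH.
    by rewrite finset.set0U subrr subr0.
  by rewrite finset.setU0 addr0 subrr.
have hwit : forall Q, Q \in L -> exists i, i \in Q /\ i \notin C.
  move=> Q QL; have [/set0Pn [i iQ] _] := hp Q QL.
  by exists i; split => //; exact: hw iQ.
split => [deg|]; first by exfalso; exact: nondeg sL hwit deg.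
rewrite /can /= leqNgt sL /=.
have hIK : forall j, j \in IK (CMI C L) -> j \notin C.
  move=> j; rewrite /IK /= ifT // inE => hc.
  have : has (fun Q : {set 'I_n} => j \in Q) L by rewrite has_count (leq_trans _ hc).
  by case/hasP => Q QL jQ; exact: hw jQ.
have hPs : forall P, P \in Ps (CMI C L) -> P != finset.set0 /\ forall j, j \in P -> j \notin C.
  move=> P; rewrite /Ps mem_filter => /andP [nz /mapP [Q QL ePQ]]; subst P.
  by split => // j; rewrite inE => /andP [_ jQ]; exact: hw jQ.
case: ifP => hIK0.
  have [j jI] := set0Pn _ hIK0.
  case: ifP => _ /= odeg; exfalso; apply: (nondeg _ _ odeg) => //= Q.
    by rewrite !inE => /orP [] /eqP ->; exists j; split => //; exact: hIK.
  rewrite !inE => /or3P [/eqP ->|/eqP ->|QPs]; try by exists j; split => //; exact: hIK.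
  have [/set0Pn [i iQ] h] := hPs Q QPs.
  by exists i; split => //; exact: h.
have e : Ps (CMI C L) = L.
  rewrite /Ps /= (eqP (negbFE hIK0)).
  rewrite (_ : [seq _ | Q <- _] = L); last first.
    by rewrite -[RHS]map_id; apply: eq_map => Q; rewrite finset.setD0.
  by apply/all_filterP/allP => Q /hp [].
rewrite e => /= odeg; exfalso; exact: nondeg sL hwit odeg.
Qed.
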